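(* For every nonzero integer $m$, every $i\in\mathbb Z$, $k\in\frac12\mathbb Z$, $r\in\mathbb Z_{\ge0}$ and every integer $s>2r$, $$\sum_{p=0}^{s}(-1)^p\left[\begin{matrix}i+m\\ p\end{matrix}\right]_m\left[\begin{matrix}i+(r-p-2)m\\ r\end{matrix}\right]_m\left[\begin{matrix}i+(r-p+1)m\\ s-p\end{matrix}\right]_m=0$$ and $$\sum_{p=0}^{s}(-1)^p\left[\begin{matrix}k+\frac m2\\ p\end{matrix}\right]_m\left[\begin{matrix}k+(r-p-\frac32)m\\ r\end{matrix}\right]_m\left[\begin{matrix}k+(r-p+\frac12)m\\ s-p\end{matrix}\right]_m=0.$$
   Context: For $a,c$ in a field of characteristic zero and $r\in\mathbb Z_{\ge0}$: $\left[\begin{matrix}a\\ r\end{matrix}\right]_c=\frac{a(a-c)(a-2c)\cdots(a-(r-1)c)}{r!}$ ($=1$ if $r=0$). *)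

(* Defs.v *)
From mathcomp Require Import all_boot all_order all_algebra.
Set Implicit Arguments. Unset Strict Implicit. Unset Printing Implicit Defensive.
Import Order.TTheory GRing.Theory Num.Theory.
Local Open Scope ring_scope.

Definition gbinom (F : fieldType) (a c : F) (r : nat) : F :=
  (\prod_(j < r) (a - j%:R * c)) / (r`!)%:R.

(* Main.v *)
Require Import Defs.
From mathcomp Require Import all_boot all_order all_algebra.
Import Order.TTheory GRing.Theory Num.Theory.
Local Open Scope ring_scope.


Lemma factr_neq0 n : (n`!)%:R != 0 :> rat.
Proof. by rewrite pnatr_eq0 -lt0n fact_gt0. Qed.

Lemma natS_neq0 n : (n.+1)%:R != 0 :> rat.
Proof. by rewrite pnatr_eq0. Qed.

Lemma gb0 (a c : rat) : gbinom a c 0 = 1.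
Proof. by rewrite /gbinom big_ord0 fact0 divr1. Qed.

Lemma gbS (a c : rat) n :
  gbinom a c n.+1 = gbinom a c n * (a - n%:R * c) / n.+1%:R.
Proof.
rewrite /gbinom big_ord_recr /= factS natrM invfM.
set P := \prod_(_ < _) _; set t := (a - _); set N := n.+1%:R; set F := n`!%:R.
by rewrite mulrA (mulrAC P F^-1) [LHS]mulrAC.
Qed.

Lemma gbSl (a c : rat) n :
  gbinom a c n.+1 = a * gbinom (a - c) c n / n.+1%:R.
Proof.
rewrite /gbinom big_ord_recl /= mul0r subr0 factS natrM invfM.
rewrite (eq_bigr (fun j : 'I_n => (a - c) - j%:R * c)); last first.
  by move=> j _; rewrite /bump /= add1n -nat1r mulrDl mul1r opprD addrA.
by rewrite !mulrA [_ * _^-1 * _]mulrAC.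
Qed.

Lemma gbPascal (a c : rat) n :
  gbinom a c n.+1 = gbinom (a - c) c n.+1 + c * gbinom (a - c) c n.
Proof.
rewrite gbSl (gbS (a - c)).
rewrite -[c * _](mulfK (natS_neq0 n)) -mulrDl; congr (_ / _).
set g := gbinom _ _ n.
rewrite [c * g]mulrC -[g * c * _]mulrA -mulrDr mulrC; congr (_ * _).
by rewrite -natr1 mulrDr mulr1 [c * _]mulrC addrA subrK subrK.
Qed.

Lemma gbAbs (x c : rat) q :
  q.+1%:R * gbinom x c q.+1 = x * gbinom (x - c) c q.
Proof. by rewrite gbSl mulrC divfK // natS_neq0. Qed.

Lemma gbTri (x c : rat) p t :
  gbinom x c p * gbinom (x - p%:R * c) c t = gbinom x c (p + t) * ('C(p + t, p))%:R.
Proof.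
rewrite /gbinom big_split_ord /=.
rewrite [in RHS](eq_bigr (fun j : 'I_t => (x - p%:R * c) - j%:R * c)); last first.
  by move=> j _; rewrite natrD mulrDl opprD addrA.
rewrite -(bin_fact (leq_addr t p)) addKn !natrM.
have hC : ('C(p + t, p))%:R != 0 :> rat by rewrite pnatr_eq0 -lt0n bin_gt0 leq_addr.
rewrite invfM [_^-1 * _]mulrC mulrA [in RHS]mulrA mulfVK // invfM mulrA.
by rewrite [_ / p`!%:R * _]mulrAC.
Qed.

Lemma altbin s : (0 < s)%N -> \sum_(p < s.+1) (-1) ^+ p * ('C(s, p))%:R = 0 :> rat.
Proof.
move=> hs; have := exprDn (1 : rat) (-1) s.
rewrite subrr expr0n eqn0Ngt hs /= => /esym H.
rewrite -[RHS]H; apply: eq_bigr => i _; by rewrite expr1n mul1r mulr_natr.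
Qed.

Lemma argS (x c : rat) r p :
  x + r.+1%:R * c - p%:R * c - c = x + r%:R * c - p%:R * c.
Proof. by rewrite -natr1 mulrDl mul1r addrA (addrAC _ c) addrK. Qed.

Lemma baseB (c : rat) r : forall (x : rat) s, (r < s)%N ->
  \sum_(p < s.+1) (-1) ^+ p * gbinom x c p
     * gbinom (x + r%:R * c - p%:R * c) c (s - p) = 0.
Proof.
elim: r => [|r IH] x s hs.
  rewrite (eq_bigr (fun p : 'I_s.+1 => gbinom x c s * ((-1) ^+ p * 'C(s, p)%:R))).
    by rewrite -mulr_sumr altbin // mulr0.
  move=> p _; rewrite mul0r addr0 -mulrA gbTri subnKC; last by rewrite -ltnS.
  by rewrite mulrCA.
case: s hs => [|s] // hs; rewrite ltnS in hs.
rewrite big_ord_recr /= subnn gb0.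
rewrite (eq_bigr (fun p : 'I_s.+1 =>
   (-1) ^+ p * gbinom x c p * gbinom (x + r%:R * c - p%:R * c) c (s.+1 - p)
   + c * ((-1) ^+ p * gbinom x c p * gbinom (x + r%:R * c - p%:R * c) c (s - p)))).
  rewrite big_split /= -mulr_sumr (IH x s hs) mulr0 addr0.
  have := IH x s.+1 (ltnW hs); rewrite big_ord_recr /= subnn gb0; apply.
move=> p _; rewrite subSn; last by rewrite -ltnS.
rewrite gbPascal argS mulrDr; congr (_ + _); exact: mulrCA.
Qed.

Lemma argS' (z c : rat) q : z - q.+1%:R * c = z - c - q%:R * c.
Proof. by rewrite -nat1r mulrDl mul1r opprD addrA. Qed.

Lemma argS2 (x c : rat) r q :
  x + r%:R * c - q.+1%:R * c = x - c + r%:R * c - q%:R * c.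
Proof. by rewrite argS' (addrAC x). Qed.

Lemma reorg (N X a G1 G2 B C : rat) :
  N * G1 = X * G2 -> N * (- a * G1 * B * C) = - X * (a * G2 * B * C).
Proof.
move=> h; rewrite !mulNr !mulrN -!mulrA; congr (- _).
by rewrite [LHS]mulrCA [RHS]mulrCA !mulrA -(mulrA a N) h mulrA.
Qed.

Lemma stepP (c : rat) r d : forall (x z : rat) s, (r + d < s)%N ->
  \sum_(p < s.+1) (-1) ^+ p * gbinom x c p * gbinom (z - p%:R * c) c d
     * gbinom (x + r%:R * c - p%:R * c) c (s - p) = 0.
Proof.
elim: d => [|d IH] x z s hs.
  rewrite (eq_bigr (fun p : 'I_s.+1 => (-1) ^+ p * gbinom x c p
       * gbinom (x + r%:R * c - p%:R * c) c (s - p))).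
    by apply: baseB; rewrite addn0 in hs.
  by move=> p _; rewrite gb0 mulr1.
pose T := fun (x z : rat) s (p : nat) => (-1) ^+ p * gbinom x c p
   * gbinom (z - p%:R * c) c d * gbinom (x + r%:R * c - p%:R * c) c (s - p).
rewrite (eq_bigr (fun p : 'I_s.+1 =>
   (T x z s p * (z - d%:R * c) - c * (p%:R * T x z s p)) / d.+1%:R)); last first.
  move=> p _; rewrite /T gbS.
  set A := (-1) ^+ p * _; set B := gbinom _ _ d; set C := gbinom _ _ (s - p).
  set K := A * B * C.
  have -> : c * (p%:R * K) = K * (p%:R * c).
    by rewrite mulrCA [RHS]mulrCA (mulrC c).
  rewrite -mulrBr (addrAC z) /K.
  by clearbody A B C; rewrite !mulrA [LHS]mulrAC [A * B * _ * C]mulrAC.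
rewrite -mulr_suml sumrB -mulr_suml -mulr_sumr.
have -> : \sum_(i < s.+1) T x z s i = 0.
  by apply: IH; apply: leq_ltn_trans hs; rewrite leq_add2l.
rewrite mul0r sub0r.
suff -> : \sum_(i < s.+1) i%:R * T x z s i = 0 by rewrite mulr0 oppr0 mul0r.
case: s hs => [|s] hs; first by rewrite ltn0 in hs.
rewrite addnS ltnS in hs.
rewrite big_ord_recl /= mul0r add0r.
rewrite (eq_bigr (fun q : 'I_s.+1 => - x * T (x - c) (z - c) s q)).
  by rewrite -mulr_sumr IH ?mulr0.
move=> q _; rewrite /T /bump /= add1n argS' argS2 subSS exprS mulN1r.
apply: reorg; exact: gbAbs.
Qed.

Lemma mainGen (c x z : rat) r s : (2 * r < s)%N ->
  \sum_(p < s.+1) (-1) ^+ p * gbinom x c p * gbinom (z - p%:R * c) c r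
     * gbinom (x + r%:R * c - p%:R * c) c (s - p) = 0.
Proof. by move=> hs; apply: stepP; rewrite addnn -mul2n. Qed.

Theorem mainTheorem2 (m : int) (hm : m != 0) (i kk : int) (r s : nat)
    (hs : (2 * r < s)%N) :
  (\sum_(p < s.+1)
      (-1) ^+ p * gbinom ((i + m)%:~R : rat) m%:~R p
        * gbinom ((i + (r%:Z - p%:Z - 2) * m)%:~R : rat) m%:~R r
        * gbinom ((i + (r%:Z - p%:Z + 1) * m)%:~R : rat) m%:~R (s - p) = 0)
  /\
  (let k : rat := kk%:~R / 2 in
   let mq : rat := m%:~R in
   \sum_(p < s.+1)
      (-1) ^+ p * gbinom (k + mq / 2) mq p
        * gbinom (k + (r%:R - p%:R - 3 / 2) * mq) mq r
        * gbinom (k + (r%:R - p%:R + 1 / 2) * mq) mq (s - p) = 0).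
Proof.
split.
  rewrite (eq_bigr (fun p : 'I_s.+1 => (-1) ^+ p * gbinom ((i + m)%:~R : rat) m%:~R p
     * gbinom ((i + (r%:Z - 2) * m)%:~R - p%:R * m%:~R) m%:~R r
     * gbinom ((i + m)%:~R + r%:R * m%:~R - p%:R * m%:~R) m%:~R (s - p))).
    exact: mainGen.
  move=> p _; congr (_ * gbinom _ _ _ * gbinom _ _ _).
    have -> : (p%:R : rat) = (p%:Z)%:~R by rewrite pmulrn.
    rewrite -intrM -intrB; congr (_%:~R).
    by rewrite (addrAC r%:Z) mulrBl addrA.
  have -> : (p%:R : rat) = (p%:Z)%:~R by rewrite pmulrn.
  have -> : (r%:R : rat) = (r%:Z)%:~R by rewrite pmulrn.
  rewrite -!intrM -intrD -intrB; congr (_%:~R).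
  by rewrite mulrDl mulrBl mul1r [_ - _ + _]addrC !addrA.
move=> k mq.
rewrite (eq_bigr (fun p : 'I_s.+1 => (-1) ^+ p * gbinom (k + mq / 2) mq p
     * gbinom ((k + (r%:R - 3 / 2) * mq) - p%:R * mq) mq r
     * gbinom ((k + mq / 2) + r%:R * mq - p%:R * mq) mq (s - p))).
  exact: mainGen.
move=> p _; congr (_ * gbinom _ _ _ * gbinom _ _ _).
  by rewrite (addrAC r%:R) mulrBl addrA.
by rewrite mulrDl mulrBl mul1r (mulrC (2^-1) mq) [_ - _ + _]addrC !addrA.
Qed.
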